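(* Let $A\in\mathbb{R}^{n\times r}$, $L\in\mathbb{R}^{s\times n}$ and $0<\alpha\le\beta$ be such that $\alpha\|Ay\|_1\le\|LAy\|_1\le\beta\|Ay\|_1$ for all $y\in\mathbb{R}^r$. Then for every integer $t\ge1$ and every $X\in\mathbb{R}^{r\times t}$, $$\frac{\alpha}{2}\|AX\|_{1,2}\le\|LAX\|_{1,2}\le2\beta\|AX\|_{1,2}.$$
   Context: For a matrix $M$, $\|M\|_{1,2}=\sum_i\|M_{i*}\|_2$ is the sum of Euclidean norms of its rows. *)

(* Defs.v *)
From HB Require Import structures.
From mathcomp Require Import all_boot all_order all_algebra.
Set Implicit Arguments. Unset Strict Implicit. Unset Printing Implicit Defensive.
Import Order.TTheory GRing.Theory Num.Theory.
Local Open Scope ring_scope.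

Definition norm1 (R : rcfType) (n : nat) (v : 'cV[R]_n) : R :=
  \sum_(i < n) `|v i 0|.

Definition norm12 (R : rcfType) (m k : nat) (M : 'M[R]_(m, k)) : R :=
  \sum_(i < m) Num.sqrt (\sum_(j < k) (M i j) ^+ 2).

(* Main.v *)
Require Import Defs.
From HB Require Import structures.
From mathcomp Require Import all_boot all_order all_algebra.
From mathcomp Require Import ring lra.
Import Order.TTheory GRing.Theory Num.Theory.
Local Open Scope ring_scope.

Definition upd {R : rcfType} (e : nat -> R) (k : nat) (v : R) : nat -> R :=
  fun j => if j == k then v else e j.

Fixpoint Ev (R : rcfType) (k : nat) (f : (nat -> R) -> R) : R :=
  match k with
  | 0 => f (fun _ => 0)
  | k'.+1 => (Ev R k' (fun e => f (upd e k' (1 : R))) + Ev R k' (fun e => f (upd e k' (-1 : R)))) / 2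
  end.

Arguments Ev {R} k f.
Lemma Ev_ext (R : rcfType) k (f g : (nat -> R) -> R) :
  (forall e, f e = g e) -> Ev k f = Ev k g.
Proof.
elim: k f g => [|k IH] f g H /=; first exact: H.
by rewrite (IH _ (fun e => g (upd e k 1))) ?(IH (fun e => f (upd e k (-1))) (fun e => g (upd e k (-1)))).
Qed.

Arguments Ev_ext {R k f g}.

Lemma Ev_le (R : rcfType) k (f g : (nat -> R) -> R) :
  (forall e, f e <= g e) -> Ev k f <= Ev k g.
Proof.
elim: k f g => [|k IH] f g H /=; first exact: H.
rewrite ler_pM2r ?invr_gt0 ?ltr0n //.
by apply: lerD; apply: IH.
Qed.

Arguments Ev_le {R k f g}.

Lemma Ev_add (R : rcfType) k (f g : (nat -> R) -> R) :
  Ev k (fun e => f e + g e) = Ev k f + Ev k g.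
Proof.
elim: k f g => [|k IH] f g //=.
rewrite (IH (fun e => f (upd e k 1))) (IH (fun e => f (upd e k (-1)))).
by rewrite -!mulrDl; congr (_ / _); ring.
Qed.

Lemma Ev_scale (R : rcfType) k (c : R) (f : (nat -> R) -> R) :
  Ev k (fun e => c * f e) = c * Ev k f.
Proof.
elim: k f => [|k IH] f //=.
rewrite (IH (fun e => f (upd e k 1))) (IH (fun e => f (upd e k (-1)))).
by rewrite -mulrDr mulrA.
Qed.

Lemma Ev_const (R : rcfType) k (c : R) : Ev k (fun _ => c) = c.
Proof.
elim: k => [|k IH] //=. rewrite IH. idtac.
lra.
Qed.

Lemma Ev_sum (R : rcfType) k m (F : 'I_m -> (nat -> R) -> R) :
  Ev k (fun e => \sum_(i < m) F i e) = \sum_(i < m) Ev k (F i).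
Proof.
elim: m F => [|m IH] F.
  rewrite big_ord0. rewrite (Ev_ext (g := fun _ => 0)) ?Ev_const // => e; by rewrite big_ord0.
rewrite big_ord_recr /=.
rewrite (Ev_ext (g := fun e => \sum_(i < m) F (widen_ord (leqnSn m) i) e + F ord_max e)).
  by rewrite Ev_add IH.
by move=> e; rewrite big_ord_recr.
Qed.

Lemma sum_upd (R : rcfType) k (w e : nat -> R) v :
  \sum_(j < k.+1) w j * upd e k v j = \sum_(j < k) w j * e j + w k * v.
Proof.
rewrite big_ord_recr /= /upd eqxx; congr (_ + _).
by apply: eq_bigr => j _ /=; rewrite ltn_eqF.
Qed.

Lemma Ev_mom2 (R : rcfType) k (w : nat -> R) (c : R) :
  Ev k (fun e => (c + \sum_(j < k) w j * e j) ^+ 2) = c ^+ 2 + \sum_(j < k) w j ^+ 2.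
Proof.
elim: k c => [|k IH] c /=.
  by rewrite !big_ord0 !addr0.
rewrite (Ev_ext (g := fun e => ((c + w k) + \sum_(j < k) w j * e j) ^+ 2)); last first.
  by move=> e; rewrite sum_upd; congr (_ ^+ 2); ring.
rewrite (Ev_ext (f := fun e => (c + \sum_(j < k.+1) w j * upd e k (-1) j) ^+ 2)
   (g := fun e => ((c - w k) + \sum_(j < k) w j * e j) ^+ 2)); last first.
  by move=> e; rewrite sum_upd; congr (_ ^+ 2); ring.
rewrite !IH big_ord_recr /=. by field.
Qed.

Lemma Ev_mom4 (R : rcfType) k (w : nat -> R) :
  exists P, P <= 3 * (\sum_(j < k) w j ^+ 2) ^+ 2 /\
  forall c, Ev k (fun e => (c + \sum_(j < k) w j * e j) ^+ 4)
     = c ^+ 4 + 6 * c ^+ 2 * \sum_(j < k) w j ^+ 2 + P.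
Proof.
elim: k => [|k [P [HP IH]]].
  exists 0; split; first by rewrite big_ord0 expr0n /= mulr0.
  by move=> c /=; rewrite !big_ord0 !addr0 mulr0 addr0.
set Q := \sum_(j < k) w j ^+ 2 in HP IH.
exists (P + w k ^+ 4 + 6 * w k ^+ 2 * Q); split.
  rewrite big_ord_recr /= -/Q.
  have h1 : 0 <= w k ^+ 4 by rewrite -[4%N]/(2*2)%N exprM sqr_ge0.
  have h2 : 3 * (Q + w k ^+ 2) ^+ 2 = 3 * Q ^+ 2 + 6 * w k ^+ 2 * Q + 3 * w k ^+ 4 by ring.
  rewrite h2. lra.
move=> c /=.
rewrite (Ev_ext (g := fun e => ((c + w k) + \sum_(j < k) w j * e j) ^+ 4)); last first.
  by move=> e; rewrite sum_upd; congr (_ ^+ 4); ring.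
rewrite (Ev_ext (f := fun e => (c + \sum_(j < k.+1) w j * upd e k (-1) j) ^+ 4)
   (g := fun e => ((c - w k) + \sum_(j < k) w j * e j) ^+ 4)); last first.
  by move=> e; rewrite sum_upd; congr (_ ^+ 4); ring.
rewrite !IH big_ord_recr /= -/Q. by field.
Qed.
Lemma abs_lb (R : rcfType) (N x : R) : 0 < N ->
  (N^-1) * x ^+ 2 + (- (4 / 27 / N ^+ 3)) * x ^+ 4 <= `|x|.
Proof.
move=> hN.
have hx2 : x ^+ 2 = `|x| ^+ 2 by rewrite real_normK ?num_real.
have hx4 : x ^+ 4 = `|x| ^+ 4 by rewrite -[4%N]/(2*2)%N !exprM hx2.
rewrite hx4 hx2.
set u := `|x|.
have hu : 0 <= u by rewrite normr_ge0.
rewrite -subr_ge0.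
have -> : u - (N^-1 * u ^+ 2 + - (4 / 27 / N ^+ 3) * u ^+ 4)
   = ((2 * u - 3 * N) ^+ 2 * (u + 3 * N) * u) / (27 * N ^+ 3).
  field. by rewrite lt0r_neq0.
apply: divr_ge0; last by rewrite mulr_ge0 // ?exprn_ge0 // ltW.
apply: mulr_ge0 => //; apply: mulr_ge0; first exact: sqr_ge0.
by rewrite addr_ge0 // mulr_ge0 // ltW.
Qed.

Lemma Ev_abs_bounds (R : rcfType) k (w : nat -> R) :
  let m := Ev k (fun e => `|\sum_(j < k) w j * e j|) in
  let N := Num.sqrt (\sum_(j < k) w j ^+ 2) in
  5 / 9 * N <= m /\ m <= N.
Proof.
move=> m N.
set Q := \sum_(j < k) w j ^+ 2.
have hQ : 0 <= Q by apply: sumr_ge0 => j _; exact: sqr_ge0.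
have hNQ : N ^+ 2 = Q by rewrite sqr_sqrtr.
have hN : 0 <= N by exact: sqrtr_ge0.
have hm : 0 <= m.
  rewrite -(Ev_const R k 0); apply: Ev_le => e; exact: normr_ge0.
have h2 : Ev k (fun e => (\sum_(j < k) w j * e j) ^+ 2) = Q.
  rewrite (Ev_ext (g := fun e => (0 + \sum_(j < k) w j * e j) ^+ 2)); last by move=> e; rewrite add0r.
  by rewrite Ev_mom2 expr0n /= add0r.
have [P [HP H4]] := Ev_mom4 R k w.
have h4 : Ev k (fun e => (\sum_(j < k) w j * e j) ^+ 4) = P.
  rewrite (Ev_ext (g := fun e => (0 + \sum_(j < k) w j * e j) ^+ 4)); last by move=> e; rewrite add0r.
  by rewrite H4 !expr0n /= mulr0 mul0r !add0r.
split.
  have [N0|Npos] := eqVneq N 0.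
    by rewrite N0 mulr0.
  have Np : 0 < N by rewrite lt0r Npos.
  apply: (le_trans _ (Ev_le (fun e => @abs_lb R N (\sum_(j < k) w j * e j) Np))).
  rewrite Ev_add !Ev_scale h2 h4.
  rewrite -/Q -hNQ in HP; rewrite -hNQ.
  have -> : N ^-1 * N ^+ 2 = N by rewrite expr2 mulKf.
  have hP : 4 / 27 / N ^+ 3 * P <= 4 / 27 / N ^+ 3 * (3 * (N ^+ 2) ^+ 2).
    apply: ler_wpM2l => //.
    have h3 : 0 < N ^+ 3 by exact: exprn_gt0.
    have : 0 < 4 / 27 / N ^+ 3.
      apply: divr_gt0 => //; lra.
    by move/ltW.
  have e4 : 4 / 27 / N ^+ 3 * (3 * (N ^+ 2) ^+ 2) = 4 / 9 * N.
    field. by rewrite lt0r_neq0.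
  lra.
have key : Ev k (fun e => 2 * m * `|\sum_(j < k) w j * e j|)
         <= Ev k (fun e => (\sum_(j < k) w j * e j) ^+ 2 + m ^+ 2).
  apply: Ev_le => e.
  set x := \sum_(j < k) w j * e j.
  have hx2 : x ^+ 2 = `|x| ^+ 2 by rewrite real_normK ?num_real.
  rewrite hx2 -subr_ge0.
  have -> : `|x| ^+ 2 + m ^+ 2 - 2 * m * `|x| = (`|x| - m) ^+ 2 by ring.
  exact: sqr_ge0.
rewrite Ev_scale Ev_add h2 Ev_const -/m in key.
have hm2 : m ^+ 2 <= Q.
  have : 2 * m * m = m ^+ 2 + m ^+ 2 by ring.
  lra.
rewrite -(ger0_norm hm) -sqrtr_sqr.
exact: ler_wsqrtr.
Qed.

Theorem mainTheorem7 (R : rcfType) (n r s : nat)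
  (A : 'M[R]_(n, r)) (L : 'M[R]_(s, n)) (alpha beta : R)
  (halpha : 0 < alpha) (hab : alpha <= beta)
  (hemb : forall y : 'cV[R]_r,
      alpha * norm1 (A *m y) <= norm1 (L *m (A *m y)) /\
      norm1 (L *m (A *m y)) <= beta * norm1 (A *m y))
  (t : nat) (ht : (1 <= t)%N) (X : 'M[R]_(r, t)) :
  alpha / 2 * norm12 (A *m X) <= norm12 (L *m (A *m X)) /\
  norm12 (L *m (A *m X)) <= 2 * beta * norm12 (A *m X).
Proof.
case: t ht X => // t _ X.
set B := A *m X. set C := L *m B.
pose v (e : nat -> R) : 'cV[R]_t.+1 := \col_(j < t.+1) e j.
pose S p (M : 'M[R]_(p, t.+1)) (i : 'I_p) (e : nat -> R) :=
  \sum_(j < t.+1) M i (inord j) * e j.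
pose m p (M : 'M[R]_(p, t.+1)) (i : 'I_p) := Ev t.+1 (fun e => `|S p M i e|).
pose Nm p (M : 'M[R]_(p, t.+1)) (i : 'I_p) :=
  Num.sqrt (\sum_(j < t.+1) M i (inord j) ^+ 2).
have hS : forall p (M : 'M[R]_(p, t.+1)) e i, (M *m v e) i 0 = S p M i e.
  move=> p M e i; rewrite mxE; apply: eq_bigr => j _.
  by rewrite mxE inord_val.
have hN : forall p (M : 'M[R]_(p, t.+1)), norm12 M = \sum_(i < p) Nm p M i.
  move=> p M; rewrite /norm12; apply: eq_bigr => i _; rewrite /Nm.
  by congr Num.sqrt; apply: eq_bigr => j _; rewrite inord_val.
have hb : forall p (M : 'M[R]_(p, t.+1)),
    5 / 9 * \sum_(i < p) Nm p M i <= \sum_(i < p) m p M i /\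
    \sum_(i < p) m p M i <= \sum_(i < p) Nm p M i.
  move=> p M; rewrite mulr_sumr; split; apply: ler_sum => i _;
    have [h1 h2] := Ev_abs_bounds R t.+1 (fun j => M i (inord j)); by [].
have hpt : forall e,
    alpha * \sum_(i < n) `|S n B i e| <= \sum_(k < s) `|S s C k e| /\
    \sum_(k < s) `|S s C k e| <= beta * \sum_(i < n) `|S n B i e|.
  move=> e; have := hemb (X *m v e).
  have -> : A *m (X *m v e) = B *m v e by rewrite mulmxA.
  have -> : L *m (B *m v e) = C *m v e by rewrite mulmxA.
  rewrite /norm1.
  have eB : \sum_(i < n) `|(B *m v e) i 0| = \sum_(i < n) `|S n B i e|.
    by apply: eq_bigr => i _; rewrite hS.
  have eC : \sum_(i < s) `|(C *m v e) i 0| = \sum_(i < s) `|S s C i e|.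
    by apply: eq_bigr => i _; rewrite hS.
  by rewrite eB eC.
have hE : alpha * \sum_(i < n) m n B i <= \sum_(k < s) m s C k /\
          \sum_(k < s) m s C k <= beta * \sum_(i < n) m n B i.
  rewrite /m -!Ev_sum -!Ev_scale; split; apply: Ev_le => e; by have [] := hpt e.
rewrite -/B -/C !hN.
have [b1 b2] := hb n B. have [c1 c2] := hb s C.
case: hE => e1 e2.
set NB := \sum_(i < n) Nm n B i in b1 b2 *.
set NC := \sum_(i < s) Nm s C i in c1 c2 *.
set MB := \sum_(i < n) m n B i in b1 b2 e1 e2.
set MC := \sum_(i < s) m s C i in c1 c2 e1 e2.
have hNB : 0 <= NB by apply: sumr_ge0 => i _; exact: sqrtr_ge0.
have hbeta : 0 < beta by exact: lt_le_trans hab.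
split.
  have : alpha * (5 / 9 * NB) <= alpha * MB by rewrite ler_pM2l.
  nra.
have : beta * MB <= beta * NB by rewrite ler_pM2l.
nra.
Qed.
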